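(* Let $\mathcal{H}=(V,E)$ be a hypergraph with no repeated hyperedge, $V=\{v_1,\dots,v_n\}$, of range $k_{\max}\geq 2$, and let $\mathcal{A}_{\mathcal{H}}$ be its layered e-adjacency tensor (defined in the context). Let $\Delta=\max_{1\le i\le n}\deg(v_i)$ and $\Delta^\star=\max_{1\le i\le k_{\max}-1}\deg(y_i)$. Then every eigenvalue $\lambda$ of $\mathcal{A}_{\mathcal{H}}$ satisfies $|\lambda|\le \max(\Delta,\Delta^\star)$.
   Context: A hypergraph $\mathcal{H}=(V,E)$ on $V=\{v_1,\dots,v_n\}$ is a family $E$ of nonempty subsets (hyperedges) of $V$; it has no repeated hyperedge if its hyperedges are pairwise distinct. The range is $k_{\max}=\max\{|e|:e\in E\}$, and $\deg(v_i)$ is the number of hyperedges containing $v_i$. Introduce new pairwise distinct vertices $y_1,\dots,y_{k_{\max}-1}\notin V$. The layered uniform hypergraph of $\mathcal{H}$ is the $k_{\max}$-uniform hypergraph on $V\cup\{y_1,\dots,y_{k_{\max}-1}\}$ with hyperedges $e\cup\{y_{|e|},\dots,y_{k_{\max}-1}\}$ for $e\in E$; $\deg(y_i)$ is the number of these hyperedges containing $y_i$. The layered e-adjacency tensor $\mathcal{A}_{\mathcal{H}}=(a_{i_1\dots i_{k_{\max}}})$ is the symmetric hypermatrix of order $k_{\max}$ and dimension $N=n+k_{\max}-1$ (index $i\le n$ for $v_i$, index $n+l$ for $y_l$) such that: for each $e=\{v_{i_1},\dots,v_{i_j}\}\in E$ with $i_1<\dots<i_j$, putting $i_l=n+l-1$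 for $l\in\{j+1,\dots,k_{\max}\}$, every entry whose index tuple is a permutation of $(i_1,\dots,i_{k_{\max}})$ equals $\frac{1}{(k_{\max}-1)!}$; all other entries are $0$. Eigenvalues (in the sense of Qi): for a hypermatrix $\mathcal{A}=(a_{i_1\dots i_m})$ of order $m$ and dimension $N$, $\lambda\in\mathbb{C}$ is an eigenvalue if there exists a nonzero $x\in\mathbb{C}^N$ with $\sum_{i_2,\dots,i_m=1}^{N} a_{i i_2\dots i_m}x_{i_2}\cdots x_{i_m}=\lambda x_i^{m-1}$ for all $i\in\{1,\dots,N\}$. *)

(* Defs.v *)
From mathcomp Require Import all_boot all_order all_algebra.
Set Implicit Arguments. Unset Strict Implicit. Unset Printing Implicit Defensive.
Import Order.TTheory GRing.Theory Num.Theory.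
Local Open Scope ring_scope.

(* A hypergraph on V = {v_1,...,v_n} (vertex v_(i+1) is the ordinal i : 'I_n)
   is a set E of subsets of 'I_n; being a set, it has no repeated hyperedge. *)

Definition kmax (n : nat) (E : {set {set 'I_n}}) : nat := \max_(e in E) #|e|.

Definition hdeg (n : nat) (E : {set {set 'I_n}}) (v : 'I_n) : nat :=
  #|[set e in E | v \in e]|.

(* Layered uniform hypergraph, for k_max = m.+2 (order k = m.+2),
   dimension N = n + (k-1) = n + m.+1.  Vertex v_(i+1) has index lshift i,
   vertex y_(l+1) (l : 'I_m.+1) has index rshift n l = n + l.
   The layered edge of e is e ∪ {y_|e|, ..., y_(k-1)}. *)
Definition layered_edge (n m : nat) (e : {set 'I_n}) : {set 'I_(n + m.+1)} :=
  [set lshift m.+1 v | v in e] :|: [set rshift n l | l : 'I_m.+1 & #|e| <= l.+1]%N.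

Definition ldeg (n m : nat) (E : {set {set 'I_n}}) (w : 'I_(n + m.+1)) : nat :=
  #|[set e in E | w \in layered_edge m e]|.

Definition layered_tensor (C : fieldType) (n m : nat) (E : {set {set 'I_n}})
    (t : {ffun 'I_m.+2 -> 'I_(n + m.+1)}) : C :=
  if [exists e in E, perm_eq (codom t) (enum (layered_edge m e))]
  then ((m.+1)`!%:R)^-1 else 0.

Definition tensor_eigenvalue (C : fieldType) (m N : nat)
    (A : {ffun 'I_m.+1 -> 'I_N} -> C) (lambda : C) : Prop :=
  exists x : 'I_N -> C, (exists i, x i != 0) /\
    forall i : 'I_N,
      \sum_(t : {ffun 'I_m.+1 -> 'I_N} | t ord0 == i)
          A t * \prod_(j : 'I_m.+1 | j != ord0) x (t j)
      = lambda * x i ^+ m.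

(* Main.v *)
Require Import Defs.
From mathcomp Require Import all_boot all_order all_algebra.
Import Order.TTheory GRing.Theory Num.Theory.
Lemma count_t (N m : nat) (S : {set 'I_N}) (i : 'I_N) :
  #|[set t : {ffun 'I_m.+2 -> 'I_N} | (t ord0 == i) && perm_eq (codom t) (enum S)]|
   <= (m.+1)`! * (i \in S).
Proof.
set T := [set t | _].
have Hinj : forall t, t \in T -> injective t.
  move=> t; rewrite inE => /andP[_ hp]; apply/injectiveP.
  by rewrite /injectiveb /dinjectiveb -/(codom t) (perm_uniq hp) enum_uniq.
have HS : forall t, t \in T -> forall k, t k \in S.
  move=> t; rewrite inE => /andP[_ hp] k.
  by rewrite -mem_enum -(perm_mem hp) codom_f.
case: (boolP (i \in S)) => iS; last first.
  rewrite muln0 leqn0 cards_eq0; apply/eqP; apply/setP => t; rewrite in_set0.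
  apply/negbTE/negP => tT; have := HS t tT ord0.
  by move: tT; rewrite inE => /andP[/eqP -> _]; rewrite (negbTE iS).
rewrite muln1.
case: (set_0Vmem T) => [-> | [t0 t0T]]; first by rewrite cards0.
have cS : #|S| = m.+2.
  move: t0T; rewrite inE => /andP[_ /perm_size]; rewrite size_codom card_ord -cardE.
  by move=> <-.
pose phi := fun t : {ffun 'I_m.+2 -> 'I_N} => [ffun j : 'I_m.+1 => t (lift ord0 j)].
rewrite -(card_in_imset (f := phi)); last first.
  move=> t1 t2 t1T t2T /ffunP eq12; apply/ffunP => k.
  case: (unliftP ord0 k) => [j -> | ->].
    by have := eq12 j; rewrite !ffunE.
  by move: t1T t2T; rewrite !inE => /andP[/eqP -> _] /andP[/eqP -> _].
have cSi : #|S :\ i| = m.+1.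
  by apply/eqP; rewrite -eqSS -cS (cardsD1 i S) iS.
apply: (@leq_trans (#|S :\ i| ^_ #|'I_m.+1|)); last by rewrite cSi card_ord ffactnn.
rewrite -card_inj_ffuns_on.
apply: subset_leq_card; apply/subsetP => f /imsetP [t tT ->].
rewrite inE; apply/andP; split.
  apply/ffun_onP => j; rewrite ffunE !inE HS // andbT.
  move: (tT); rewrite inE => /andP[/eqP <- _].
  apply/negP => /eqP /(Hinj t tT) /eqP; by rewrite eq_sym (negbTE (neq_lift _ _)).
apply/injectiveP => j1 j2; rewrite !ffunE => /(Hinj t tT); exact: lift_inj.
Qed.

Local Open Scope ring_scope.

Lemma exists_max (T : finType) (R : numDomainType) (f : T -> R) (t0 : T) :
  (forall t, f t \is Num.real) -> exists i, forall j, f j <= f i.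
Proof.
move=> Hr.
suff [i Hi] : exists i, forall j, j \in enum T -> f j <= f i.
  by exists i => j; apply: Hi; rewrite mem_enum.
elim: (enum T) => [|a s [i Hi]]; first by exists t0.
case/orP: (real_leVge (Hr a) (Hr i)) => h.
  exists i => j; rewrite inE => /orP[/eqP -> //|]; exact: Hi.
exists a => j; rewrite inE => /orP[/eqP -> //|js].
exact: le_trans (Hi j js) h.
Qed.

Lemma ldeg_bound (n m : nat) (E : {set {set 'I_n}}) (i : 'I_(n + m.+1)) :
  (ldeg E i <= maxn (\max_(v : 'I_n) hdeg E v)
                     (\max_(l : 'I_m.+1) ldeg E (rshift n l)))%N.
Proof.
rewrite -(splitK i); case: (split i) => [v|l] /=; last first.
  by apply: leq_trans (leq_maxr _ _); exact: (leq_bigmax l).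
apply: leq_trans (leq_maxl _ _); apply: (@leq_trans (hdeg E v)); last exact: (leq_bigmax v).
apply: subset_leq_card; apply/subsetP => e; rewrite !inE => /andP[-> /=].
case/orP => [/imsetP [w wE /lshift_inj -> //] | /imsetP [l _ /(congr1 val) /= h]].
by have := ltn_ord v; rewrite h ltnNge leq_addr.
Qed.

Lemma sum_bound (C : numFieldType) (n m : nat) (E : {set {set 'I_n}}) (i : 'I_(n + m.+1)) :
  \sum_(t : {ffun 'I_m.+2 -> 'I_(n + m.+1)} | t ord0 == i) `|@layered_tensor C n m E t|
   <= (ldeg E i)%:R.
Proof.
set c : C := ((m.+1)`!%:R)^-1.
have c0 : 0 <= c by rewrite invr_ge0 ler0n.
pose b (t : {ffun 'I_m.+2 -> 'I_(n + m.+1)}) (e : {set 'I_n}) : nat := perm_eq (codom t) (enum (layered_edge m e)).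
apply: (@le_trans _ _ (\sum_(t : {ffun 'I_m.+2 -> 'I_(n + m.+1)} | t ord0 == i)
          c * (\sum_(e in E) b t e)%N%:R)).
  apply: ler_sum => t _; rewrite /layered_tensor.
  case: existsP => [[e /andP[eE hp]] | _]; last by rewrite normr0 mulr_ge0.
  rewrite -/c ger0_norm // -{1}[c]mulr1; apply: ler_wpM2l => //; rewrite ler1n (bigD1 e) //= /b hp.
  by rewrite addnC addn1.
rewrite -mulr_sumr -natr_sum exchange_big /=.
apply: (@le_trans _ _ (c * ((m.+1)`! * \sum_(e in E) (i \in layered_edge m e))%N%:R)).
  apply: ler_wpM2l => //; rewrite ler_nat big_distrr /=; apply: leq_sum => e _.
  apply: leq_trans (@count_t _ m (layered_edge m e) i).
  rewrite -sum1_card big_mkcond [X in (_ <= X)%N]big_mkcond /=.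
  by apply/eq_leq/eq_bigr => t _; rewrite inE /b; case: (t ord0 == i); case: perm_eq.
rewrite natrM mulrA mulVf ?pnatr_eq0 -?lt0n ?fact_gt0 // mul1r ler_nat.
rewrite /ldeg -sum1_card; apply/eq_leq.
rewrite big_mkcond [RHS]big_mkcond; apply: eq_bigr => e _; rewrite [in RHS]in_set.
by case: (e \in E); case: (i \in _).
Qed.

Theorem mainTheorem2 (C : numClosedFieldType) (n m : nat)
    (E : {set {set 'I_n}})
    (hE : forall e, e \in E -> e != set0)
    (hk : kmax E = m.+2)
    (lambda : C) :
  tensor_eigenvalue (@layered_tensor C n m E) lambda ->
  `|lambda| <= (maxn (\max_(i : 'I_n) hdeg E i)
                     (\max_(l : 'I_m.+1) ldeg E (rshift n l)))%:R.
Proof.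
move=> [x [[i0 nz] eig]].
have [i Hi] := @exists_max _ _ (fun j => `|x j|) i0 (fun j => normr_real _).
set M := `|x i| in Hi.
have M0 : 0 < M by apply: lt_le_trans (Hi i0); rewrite normr_gt0.
have key : `|lambda| * M ^+ m.+1 <= (ldeg E i)%:R * M ^+ m.+1.
  have -> : `|lambda| * M ^+ m.+1 = `|lambda * x i ^+ m.+1| by rewrite normrM normrX.
  rewrite -eig.
  apply: le_trans (ler_norm_sum _ _ _) _.
  apply: (@le_trans _ _ (\sum_(t : {ffun 'I_m.+2 -> 'I_(n + m.+1)} | t ord0 == i)
           `|@layered_tensor C n m E t| * M ^+ m.+1)).
    apply: ler_sum => t _; rewrite normrM; apply: ler_wpM2l => //; rewrite normr_prod.
    apply: (@le_trans _ _ (\prod_(j < m.+2 | j != ord0) M)).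
      by apply: ler_prod => j _; rewrite normr_ge0 Hi.
    rewrite (eq_bigl (fun j => j \in predC1 ord0)) // prodr_const cardC1 card_ord.
    by [].
  rewrite -mulr_suml; apply: ler_wpM2r; [exact: exprn_ge0 (ltW M0) | exact: sum_bound].
rewrite ler_pM2r ?exprn_gt0 // in key.
apply: le_trans key _; rewrite ler_nat; exact: ldeg_bound.
Qed.
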